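(* Let $G=(V,E)$ be a finite simple graph of order $n$ and let $T=n-1$. If $(x,y,z)$ is an optimal solution of the Time Step Model $\mathrm{TSM}(G,T)$ (minimizing $\sum_{v\in V}x^0_v$), then $C=\{v\in V\colon x^0_v=1\}$ is a minimum zero forcing set of $G$.
   Context: Zero forcing: under the standard color change rule a filled vertex $u$ can force a non-filled vertex $v$ if $v$ is the only non-filled neighbor of $u$; $C\subseteq V$ is a zero forcing set if, starting with $C$ filled and repeatedly forcing, all of $V$ becomes filled. A minimum zero forcing set is a zero forcing set of minimum size. $N(u)$ is the neighborhood of $u$ and $d(u)=|N(u)|$. Time Step Model: $A$ is the set of arcs containing $(u,v)$ and $(v,u)$ for each edge $\{u,v\}$, $[T]=\{1,\dots,T\}$. $\mathrm{TSM}(G,T)$ has binary variables $x^t_v$ ($v\in V$, $t\in\{0,\dots,T\}$), $y^t_a$ ($a\in A$, $t\in[T]$), $z^t$ ($t\in[T]$), with constraints: (1) $x^0_v+\sum_{t\in[T]}\sum_{a=(u,v)\in A}y^t_a=1$ for all $v$; (2) $y^t_a\leq x^{t-1}_u$ for all $a=(u,v)\in A$, $t\in[T]$; (3) $y^t_a\leq x^{t-1}_w$ for all $a=(u,v)\in A$, $w\in N(u)\setminus\{v\}$, $t\in[T]$; (4) $x^t_v=x^{t-1}_v+\sum_{a=(u,v)\in A}y^t_a$ for all $v$, $t\in[T]$; (5) $x^{t-1}_u-x^{t-1}_v+\sum_{w\in N(u)\setminus\{v\}}x^{t-1}_w\leq\sum_{a=(w,v)\in A}y^t_a+d(u)-1$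 for all $(u,v)\in A$, $t\in[T]$; (6) $\frac1n\sum_{v\in V}(x^t_v-x^{t-1}_v)-z^t\leq0$ for all $t\in[T]$; (7) $z^t-\sum_{v\in V}(x^t_v-x^{t-1}_v)\leq 0$ for all $t\in[T]$. Objective: minimize $\sum_{v\in V}x^0_v$. *)

(* Defs.v *)
From mathcomp Require Import all_boot all_order all_algebra.
Set Implicit Arguments. Unset Strict Implicit. Unset Printing Implicit Defensive.
Import Order.TTheory GRing.Theory Num.Theory.

(* A finite simple graph on vertex set V is given by an adjacency relation
   e : rel V that is symmetric and irreflexive. N(u) = [set w | e u w]. *)

Section ZF.
Variables (V : finType) (e : rel V).

Definition nbhd (u : V) : {set V} := [set w | e u w].
Definition deg (u : V) : nat := #|nbhd u|.

Inductive filled (C : {set V}) : V -> Prop :=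
| filled_init v : v \in C -> filled C v
| filled_force u v : filled C u -> e u v ->
    (forall w, e u w -> w != v -> filled C w) -> filled C v.

Definition zero_forcing_set (C : {set V}) : Prop := forall v, filled C v.

Definition min_zero_forcing_set (C : {set V}) : Prop :=
  zero_forcing_set C /\ forall D : {set V}, zero_forcing_set D -> #|C| <= #|D|.

(* Binary variables:
   x t v   for v in V, t in {0..T};
   y t u v for the arc a = (u,v) in A (i.e. e u v), t in [T];
   z t     for t in [T].
   Values of the functions outside these index ranges are irrelevant. *)
Local Open Scope ring_scope.

Definition b2q (b : bool) : rat := b%:R.

Definition TSM_feasible (Tm : nat) (x : nat -> V -> bool)
    (y : nat -> V -> V -> bool) (z : nat -> bool) : Prop :=
  let n := #|V| in
  (* (1) *)
  (forall v, b2q (x 0%N v) + \sum_(t < Tm) \sum_(u | e u v) b2q (y t.+1 u v) = 1)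
  (* (2) *)
  /\ (forall u v t, e u v -> (1 <= t <= Tm)%N -> b2q (y t u v) <= b2q (x t.-1 u))
  (* (3) *)
  /\ (forall u v w t, e u v -> e u w -> w != v -> (1 <= t <= Tm)%N ->
        b2q (y t u v) <= b2q (x t.-1 w))
  (* (4) *)
  /\ (forall v t, (1 <= t <= Tm)%N ->
        b2q (x t v) = b2q (x t.-1 v) + \sum_(u | e u v) b2q (y t u v))
  (* (5) *)
  /\ (forall u v t, e u v -> (1 <= t <= Tm)%N ->
        b2q (x t.-1 u) - b2q (x t.-1 v)
          + \sum_(w | e u w && (w != v)) b2q (x t.-1 w)
        <= \sum_(w | e w v) b2q (y t w v) + (deg u)%:R - 1)
  (* (6) *)
  /\ (forall t, (1 <= t <= Tm)%N ->
        (n%:R)^-1 * \sum_v (b2q (x t v) - b2q (x t.-1 v)) - b2q (z t) <= 0)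
  (* (7) *)
  /\ (forall t, (1 <= t <= Tm)%N ->
        b2q (z t) - \sum_v (b2q (x t v) - b2q (x t.-1 v)) <= 0).

Definition TSM_objective (x : nat -> V -> bool) : rat := \sum_v b2q (x 0%N v).

Definition TSM_optimal (Tm : nat) x y z : Prop :=
  TSM_feasible Tm x y z /\
  forall x' y' z', TSM_feasible Tm x' y' z' -> TSM_objective x <= TSM_objective x'.

End ZF.

(* Main.v *)
Require Import Defs.
From mathcomp Require Import all_boot all_order all_algebra.
From mathcomp Require Import zify ring lra.
Set Implicit Arguments. Unset Strict Implicit. Unset Printing Implicit Defensive.
Import Order.TTheory GRing.Theory Num.Theory.

Section Proof.
Variables (V : finType) (e : rel V).
Local Open Scope ring_scope.

Lemma b2q_le b b' : b2q b <= b2q b' -> b -> b'.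
Proof. by case: b; case: b' => //; rewrite /b2q /= ler10. Qed.

Lemma sum_b2q (I : finType) (P : pred I) (F : I -> bool) :
  \sum_(i | P i) b2q (F i) = #|[set i | P i && F i]|%:R.
Proof.
rewrite /b2q -natr_sum; congr (_%:R).
rewrite -sum1_card big_mkcond /= [RHS]big_mkcond /=; apply: eq_bigr => i _.
by rewrite inE; case: (P i); case: (F i).
Qed.

Lemma sum_b2q0 (I : finType) (P : pred I) (F : I -> bool) :
  (forall i, P i -> F i = false) -> \sum_(i | P i) b2q (F i) = 0.
Proof. by move=> H; rewrite big1 // => i /H ->. Qed.

Lemma b2q_or a b : b2q (a || b) = b2q a + b2q (~~ a && b).
Proof. by case: a; case: b; rewrite /b2q /= ?addr0 ?add0r. Qed.


Section PartA.
Variables (Tm : nat) (x : nat -> V -> bool) (y : nat -> V -> V -> bool) (z : nat -> bool).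
Hypothesis HF : TSM_feasible e Tm x y z.
Let C := [set v | x 0%N v].

Lemma forced t u v : (1 <= t <= Tm)%N -> e u v -> y t u v ->
  (forall w, x t.-1 w -> filled e C w) -> filled e C v.
Proof.
case: HF => _ [H2 [H3 _]] Ht euv yt IH.
apply: (filled_force (u := u)) => //.
  by apply: IH; exact: (b2q_le (H2 u v t euv Ht) yt).
move=> w euw wv; apply: IH; exact: (b2q_le (H3 u v w t euv euw wv Ht) yt).
Qed.

Lemma xfill t : (t <= Tm)%N -> forall v, x t v -> filled e C v.
Proof.
elim: t => [|t IH] Ht v xv; first by apply: filled_init; rewrite inE.
have Ht' : (t <= Tm)%N by lia.
case xtv: (x t v); first exact: IH.
case: HF => _ [_ [_ [H4 _]]].
have := H4 v t.+1 Ht; rewrite /= xtv xv => Hs.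
case: (boolP [exists u, e u v && y t.+1 u v]).
  move/existsP => [u /andP[euv yu]].
  apply: (forced (t := t.+1) (u := u)) => //.
  by move=> w; apply: IH.
rewrite negb_exists => /forallP Hn.
move: Hs; rewrite (@sum_b2q0 _ _ (fun u => y t.+1 u v)) /b2q /=.
  by move/eqP; rewrite addr0 oner_eq0.
by move=> u euv; move: (Hn u); rewrite euv /=; case: (y _ _ _).
Qed.

Lemma partA : zero_forcing_set e C.
Proof.
move=> v; case x0: (x 0%N v); first by apply: filled_init; rewrite inE.
case: HF => H1 _.
have := H1 v; rewrite x0 => Hs.
case: (boolP [exists t : 'I_Tm, exists u, e u v && y t.+1 u v]).
  move/existsP => [t /existsP [u /andP[euv yu]]].
  apply: (forced (t := t.+1) (u := u)) => //; first by have := ltn_ord t; lia.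
  by move=> w; apply: xfill; have := ltn_ord t; lia.
rewrite negb_exists => /forallP Hn.
move: Hs; rewrite big1 /b2q /=.
  by move/eqP; rewrite addr0 eq_sym oner_eq0.
move=> t _; apply: sum_b2q0 => u euv.
by move: (Hn t); rewrite negb_exists => /forallP /(_ u); rewrite euv /=; case: (y _ _ _).
Qed.

End PartA.

Section PartB.
Variable D : {set V}.
Hypothesis e_sym : symmetric e.

Definition okf (S : {set V}) v u :=
  (u \in S) && e u v && [forall w, (e u w && (w != v)) ==> (w \in S)].
Definition forcer S v := [pick u | okf S v u].
Definition step S := S :|: [set v | forcer S v != None].
Definition Sq t := iter t step D.
Definition xq t v := v \in Sq t.
Definition yq t u v :=
  (0 < t)%N && (v \notin Sq t.-1) && (forcer (Sq t.-1) v == Some u).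
Definition zq t := (#|Sq t.-1| < #|Sq t|)%N.

Lemma SqS t : Sq t.+1 = step (Sq t). Proof. by []. Qed.

Lemma Sq_mono t : Sq t \subset Sq t.+1.
Proof. by rewrite SqS subsetUl. Qed.

Lemma D_Sq t : D \subset Sq t.
Proof. elim: t => [|t IH] //; exact: subset_trans IH (Sq_mono t). Qed.

Lemma closed S : step S = S -> D \subset S -> forall v, filled e D v -> v \in S.
Proof.
move=> HS DS v; elim => [w wD | u w _ uS euw Hw IHw].
  exact: (subsetP DS).
rewrite -HS !inE; apply/orP; right.
rewrite /forcer; case: pickP => // H0.
have := H0 u; rewrite /okf uS euw /=; move/negbT/negP => Hc; exfalso; apply: Hc.
apply/forallP => w'; apply/implyP => /andP[euw' w'w]; exact: IHw.
Qed.

Lemma filled_nonempty v : filled e D v -> exists d, d \in D.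
Proof. by elim => [w wD|]; [exists w|]. Qed.

Hypothesis DZ : zero_forcing_set e D.

Lemma Sq_grow t : Sq t = setT \/ (t < #|Sq t|)%N.
Proof.
elim: t => [|t [IH|IH]].
- rewrite /Sq /=.
  case: (boolP (D == setT)) => [/eqP -> | ]; [by left|].
  move=> /negP HD; right; rewrite card_gt0.
  case: (boolP (D == set0)) => // /eqP D0; exfalso; apply: HD.
  apply/eqP/setP => v; have [d] := filled_nonempty (DZ v); by rewrite D0 inE.
- left; apply/eqP; rewrite eqEsubset subsetT /= -IH; exact: Sq_mono.
- case: (boolP (step (Sq t) == Sq t)) => [/eqP Hst | Hne].
    left; apply/setP => v; rewrite in_setT SqS Hst; exact: (closed Hst (D_Sq t) (DZ v)).
  right; rewrite SqS.
  have : Sq t \proper step (Sq t) by rewrite properEneq eq_sym Hne /= -SqS Sq_mono.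
  move/proper_card; lia.
Qed.

Lemma Sq_full : Sq (#|V|.-1) = setT.
Proof.
case: (Sq_grow (#|V|.-1)) => // H.
apply/eqP; rewrite eqEcard subsetT cardsT /=.
have := subset_leq_card (subsetT (Sq #|V|.-1)); rewrite cardsT; move: H; set m := #|Sq _|; case: #|V| => [|k] /=; lia.
Qed.

Lemma sum_yq t v : (0 < t)%N ->
  \sum_(u | e u v) b2q (yq t u v) =
  b2q ((v \notin Sq t.-1) && (forcer (Sq t.-1) v != None)).
Proof.
move=> t0; rewrite /yq t0 /=.
case Hf: (forcer (Sq t.-1) v) => [u0|].
  have : okf (Sq t.-1) v u0.
    by move: Hf; rewrite /forcer; case: pickP => // u1 Hu1 [<-].
  move=> /andP[/andP[_ eu0] _].
  rewrite (bigD1 u0) //= eqxx andbT big1 ?addr0 //.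
  move=> u /andP[_ uu0]; rewrite (_ : (Some u0 == Some u) = false) ?andbF //; apply/negbTE; by rewrite eq_sym /=.
rewrite sum_b2q0 /=; first by rewrite andbF.
by move=> u _; rewrite andbF.
Qed.

Lemma xqS t v : xq t.+1 v = xq t v || (forcer (Sq t) v != None).
Proof. by rewrite /xq SqS /step !inE. Qed.

Lemma forcerP S v u : forcer S v = Some u -> okf S v u.
Proof. by rewrite /forcer; case: pickP => // u1 Hu1 [<-]. Qed.

Lemma b2q_leP (b b' : bool) : (b -> b') -> b2q b <= b2q b'.
Proof. by case: b; case: b' => // H; rewrite /b2q /= ?ler01 ?lexx //; have := H isT. Qed.

Lemma sum_b2qT (A : {set V}) : \sum_v b2q (v \in A) = #|A|%:R.
Proof.
rewrite /b2q -natr_sum -sum1_card; congr (_%:R); rewrite [RHS]big_mkcond /=.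
by apply: eq_bigr => i _; case: (i \in A).
Qed.

Lemma sum_diff t : \sum_v (b2q (xq t v) - b2q (xq t.-1 v)) = #|Sq t|%:R - #|Sq t.-1|%:R.
Proof. by rewrite sumrB /xq !sum_b2qT. Qed.

Lemma deg_eq u v : e u v -> deg e u = (#|[set w | e u w && (w != v)]|).+1.
Proof.
move=> euv; rewrite /deg (_ : nbhd e u = v |: [set w | e u w && (w != v)]).
  by rewrite cardsU1 inE eqxx andbF.
apply/setP => w; rewrite !inE; case: (boolP (w == v)) => [/eqP -> | _] /=.
  by rewrite euv.
by rewrite andbT.
Qed.

Lemma feasible : TSM_feasible e (#|V|.-1) xq yq zq.
Proof.
split; [|split; [|split; [|split; [|split; [|split]]]]].
- move=> v.
  rewrite (eq_bigr (fun t : 'I_(#|V|.-1) => b2q (xq t.+1 v) - b2q (xq t v))); last first.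
    move=> t _; rewrite sum_yq //= xqS b2q_or /xq; lra.
  rewrite -(big_mkord xpredT (fun t => b2q (xq t.+1 v) - b2q (xq t v))).
  rewrite telescope_sumr // /xq Sq_full in_setT addrC subrK //.
- move=> u v t euv Ht; apply: b2q_leP; rewrite /yq => /andP[_ /eqP /forcerP].
  by case/andP => /andP[].
- move=> u v w t euv euw wv Ht; apply: b2q_leP; rewrite /yq => /andP[_ /eqP /forcerP].
  case/andP => _ /forallP /(_ w); rewrite euw wv /=; exact.
- move=> v [|t] //= Ht; by rewrite sum_yq //= xqS b2q_or.
- move=> u v [|t] //= euv Ht.
  rewrite sum_yq // sum_b2q (deg_eq euv) /=.
  set A := [set w | e u w && (w != v)].
  set B := [set w | (e u w && (w != v)) && xq t w].
  have hBA : (#|B| <= #|A|)%N.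
    by apply: subset_leq_card; apply/subsetP => w; rewrite !inE => /andP[].
  suff Hn : ((xq t u : nat) + #|B| <= ((v \notin Sq t) && (forcer (Sq t) v != None) : nat) + #|A| + (xq t v : nat))%N.
    move: Hn; rewrite -(ler_nat rat) !natrD /b2q => Hn.
    rewrite -addn1 natrD; lra.
  case xv: (xq t v).
    by case: (xq t u) => /=; lia.
  have xv' : v \notin Sq t by rewrite /xq in xv; rewrite xv.
  rewrite xv' /=.
  case Hf: (forcer (Sq t) v) => [u0|] /=.
    by case: (xq t u) => /=; lia.
  case xu: (xq t u) => /=; last by lia.
  have : ~~ okf (Sq t) v u.
    by apply/negP => Hok; move: Hf; rewrite /forcer; case: pickP => // /(_ u); rewrite Hok.
  rewrite /okf -/(xq t u) xu euv /= => /forallPn [w].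
  rewrite negb_imply => /andP[Hw wS].
  have : B \proper A.
    rewrite properE; apply/andP; split.
      by apply/subsetP => w'; rewrite !inE => /andP[].
    apply/subsetPn; exists w; first by rewrite inE.
    by rewrite !inE Hw /xq (negbTE wS).
  move/proper_card; lia.
- move=> t Ht; rewrite sum_diff /zq.
  have mono : (#|Sq t.-1| <= #|Sq t|)%N.
    by case: t Ht => // t _; apply: subset_leq_card; exact: Sq_mono.
  have hn : (#|Sq t| <= #|V|)%N.
    by have := subset_leq_card (subsetT (Sq t)); rewrite cardsT.
  case: ltnP => h.
    have hn0 : (#|V|%:R : rat) != 0 by rewrite pnatr_eq0; lia.
    have Hab : (#|Sq t|%:R - #|Sq t.-1|%:R <= #|V|%:R :> rat).
      by move: hn; rewrite -(ler_nat rat) => hn; have := ler0n rat #|Sq t.-1|; lra.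
    rewrite /b2q /= subr_le0 -[X in _ <= X](mulVf hn0).
    by apply: ler_wpM2l => //; rewrite invr_ge0 ler0n.
  have E : #|Sq t| = #|Sq t.-1| by apply/eqP; rewrite eqn_leq h mono.
  by rewrite E subrr mulr0 /b2q /= subrr.
- move=> t Ht; rewrite sum_diff /zq.
  have mono : (#|Sq t.-1| <= #|Sq t|)%N.
    by case: t Ht => // t _; apply: subset_leq_card; exact: Sq_mono.
  case: ltnP => h.
    move: h; rewrite -addn1 -(ler_nat rat) natrD /b2q /= => h; lra.
  have E : #|Sq t| = #|Sq t.-1| by apply/eqP; rewrite eqn_leq h mono.
  by rewrite E subrr /b2q /= subrr.
Qed.

End PartB.

End Proof.

Theorem corollary4p4 (V : finType) (e : rel V)
    (e_sym : symmetric e) (e_irr : irreflexive e)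
    (x : nat -> V -> bool) (y : nat -> V -> V -> bool) (z : nat -> bool) :
  TSM_optimal e (#|V|.-1) x y z ->
  min_zero_forcing_set e [set v | x 0 v].
Proof.
move=> [HF Hopt]; split; first exact: partA HF.
move=> D DZ.
have := Hopt _ _ _ (feasible DZ).
rewrite /TSM_objective (eq_bigr (fun v => b2q (v \in [set v | x 0%N v]))); last first.
  by move=> v _; rewrite inE.
by rewrite !sum_b2qT ler_nat.
Qed.
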